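(* Let $x_i,x_j\in V$ be distinct vertices with $x_i$ a potential parent of $x_j$. Then $x_i,x_j$ are not in PP1 relation if and only if $x_i\not\perp x_j$.
   Context: Let $G=(V,E)$ be a DAG on $V=\{x_1,\dots,x_d\}$ whose vertices are random variables generated by a nonlinear additive noise model $x_i=f_i(\mathrm{Pa}(x_i))+\varepsilon_i$ with jointly independent noise terms, assumed identifiable in the sense of Peters et al. (2014) for nonlinear ANMs, and with distribution Markov and faithful to $G$. $\mathrm{Pa}$, $\mathrm{De}$ denote parents and descendants. A path is active (relative to the empty set) if it contains no collider (a vertex with both adjacent path edges pointing into it). A potential parent of $x_j$ is a vertex $x_i\neq x_j$ with $x_i\notin\mathrm{De}(x_j)$. With $C=\mathrm{Pa}(x_j)\setminus\{x_i\}$, the pair is in PP1 relation if $x_i\notin\mathrm{Pa}(x_j)$ and there is no active path between $x_i$ and any vertex of $C$. $\perp$ denotes statistical independence. *)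

(* Defs.v *)
From mathcomp Require Import all_boot all_order all_algebra.
From mathcomp Require Import all_classical all_reals.
From mathcomp Require Import measure lebesgue_measure probability.
Set Implicit Arguments.
Unset Strict Implicit.
Unset Printing Implicit Defensive.
Import Order.TTheory GRing.Theory Num.Theory.
Local Open Scope classical_set_scope.
Local Open Scope ring_scope.

Definition is_dag n (E : rel 'I_n) : Prop :=
  forall u v, E u v -> ~~ connect E v u.

Definition Pa n (E : rel 'I_n) (v : 'I_n) : {set 'I_n} := [set u | E u v].

(* descendants of v (reachable by a nonempty directed path; for a DAG
   this excludes v itself) *)
Definition De n (E : rel 'I_n) (v : 'I_n) : {set 'I_n} :=
  [set w | [exists u, E v u && connect E u w]].

Definition adj n (E : rel 'I_n) : rel 'I_n := fun u v => E u v || E v u.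

Definition is_path_between n (E : rel 'I_n) (a b : 'I_n) (p : seq 'I_n) :
  Prop :=
  [/\ path (adj E) a p, last a p = b & uniq (a :: p)].

Definition collider_free n (E : rel 'I_n) (s : seq 'I_n) : Prop :=
  forall (x0 : 'I_n) (k : nat), (k.+2 < size s)%N ->
    ~~ (E (nth x0 s k) (nth x0 s k.+1) && E (nth x0 s k.+2) (nth x0 s k.+1)).

(* there is an active path (relative to the empty set) between a and b *)
Definition active_path n (E : rel 'I_n) (a b : 'I_n) : Prop :=
  exists p : seq 'I_n, is_path_between E a b p /\ collider_free E (a :: p).

Definition potential_parent n (E : rel 'I_n) (i j : 'I_n) : Prop :=
  i != j /\ i \notin De E j.

Definition PP1 n (E : rel 'I_n) (i j : 'I_n) : Prop :=
  i \notin Pa E j /\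
  forall c, c \in Pa E j :\ i -> ~ active_path E i c.

Definition indep2 d (T : measurableType d) (R : realType)
  (P : probability T R) (X Y : T -> R) : Prop :=
  forall A B : set R, measurable A -> measurable B ->
    P (X @^-1` A `&` Y @^-1` B) = (P (X @^-1` A) * P (Y @^-1` B))%E.

Definition mutually_indep d (T : measurableType d) (R : realType)
  (P : probability T R) n (Z : 'I_n -> T -> R) : Prop :=
  forall (S : {set 'I_n}) (A : 'I_n -> set R),
    (forall k, measurable (A k)) ->
    P [set w | forall k, k \in S -> A k (Z k w)] =
    (\prod_(k in S) P (Z k @^-1` A k))%E.

Definition additive_noise_model d (T : measurableType d) (R : realType)
  (P : probability T R) n (E : rel 'I_n)
  (X eps : 'I_n -> T -> R) (f : 'I_n -> ('I_n -> R) -> R) : Prop :=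
  [/\ forall k (v w : 'I_n -> R),
        (forall u, u \in Pa E k -> v u = w u) -> f k v = f k w,
      forall k w, X k w = f k (fun u => X u w) + eps k w
    & mutually_indep P eps].

(* Markov property (consequence used here: global Markov with empty
   conditioning set, for pairs of vertices) *)
Definition markov_pairs d (T : measurableType d) (R : realType)
  (P : probability T R) n (E : rel 'I_n) (X : 'I_n -> T -> R) : Prop :=
  forall a b, a != b -> ~ active_path E a b -> indep2 P (X a) (X b).

(* faithfulness (empty conditioning set, pairs of vertices) *)
Definition faithful_pairs d (T : measurableType d) (R : realType)
  (P : probability T R) n (E : rel 'I_n) (X : 'I_n -> T -> R) : Prop :=
  forall a b, a != b -> indep2 P (X a) (X b) -> ~ active_path E a b.

(* Main.v *)
Require Import Defs.
From mathcomp Require Import all_boot all_order all_algebra.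
From mathcomp Require Import all_classical all_reals.
From mathcomp Require Import measure lebesgue_measure probability.
From mathcomp Require Import zify.

Lemma cf_prefix n (E : rel 'I_n) (s1 s2 : seq 'I_n) :
  collider_free E (s1 ++ s2) -> collider_free E s1.
Proof.
move=> H x0 k Hk; have := H x0 k; rewrite size_cat !nth_cat.
have h1 : (k < size s1)%N by lia.
have h2 : (k.+1 < size s1)%N by lia.
rewrite h1 h2 Hk; apply; lia.
Qed.

Lemma cf_rcons n (E : rel 'I_n) (x j : 'I_n) (p : seq 'I_n) :
  is_dag E -> collider_free E (x :: p) -> E (last x p) j ->
  collider_free E (rcons (x :: p) j).
Proof.
move=> dag H Ec y0 k; rewrite size_rcons => Hk.
case: (ltnP k.+2 (size (x :: p))) => h.
  have h1 : (k < size (x :: p))%N by lia.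
  have h2 : (k.+1 < size (x :: p))%N by lia.
  rewrite !nth_rcons h h1 h2; exact: H.
have e : k.+2 = size (x :: p) by lia.
have h1 : (k < size (x :: p))%N by lia.
have h2 : (k.+1 < size (x :: p))%N by lia.
rewrite !nth_rcons h1 h2 e ltnn eqxx.
have -> : k.+1 = (size (x :: p)).-1 by rewrite -e.
rewrite nth_last /=.
apply/negP => /andP [_ Ejl].
by move: (dag _ _ Ec); rewrite (connect1 Ejl).
Qed.

Lemma back n (E : rel 'I_n) (i j : 'I_n) (q : seq 'I_n) :
  path (adj E) i (rcons q j) -> E j (last i q) ->
  collider_free E (i :: rcons q j) -> i \in De E j.
Proof.
move=> /(pathP i) pth Ejl cf.
have claim : forall l k, k + l = size q ->
  (exists2 u, E j u & connect E u (nth i (i :: rcons q j) k)) /\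
  E (nth i (i :: rcons q j) k.+1) (nth i (i :: rcons q j) k).
  elim=> [|l IH] k.
    rewrite addn0 => ->.
    have e1 : nth i (i :: rcons q j) (size q) = last i q.
      rewrite -rcons_cons nth_rcons /= ltnSn.
      by rewrite -[size q]/((size (i::q)).-1) nth_last.
    have e2 : nth i (i :: rcons q j) (size q).+1 = j.
      by rewrite -rcons_cons nth_rcons /= ltnn eqxx.
    rewrite e1 e2; split => //; exists (last i q) => //.
  move=> hk; have [[u Eu cu] Ek] := IH k.+1 ltac:(lia).
  have Ek1 : E (nth i (i :: rcons q j) k.+1) (nth i (i :: rcons q j) k).
    have := pth k; rewrite size_rcons => /(_ ltac:(lia)).
    rewrite /adj /= => /orP [] // Ekk.
    have := cf i k; rewrite /= size_rcons => /(_ ltac:(lia)).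
    by rewrite /= Ekk Ek.
  split => //; exists u => //.
  exact: (connect_trans cu (connect1 Ek1)).
have [[u Eu cu] _] := claim (size q) 0 ltac:(lia).
rewrite inE; apply/existsP; exists u; by rewrite Eu.
Qed.

Theorem lemma9 (R : realType) (d : measure_display) (T : measurableType d)
  (P : probability T R) (n : nat) (E : rel 'I_n)
  (X eps : 'I_n -> {RV P >-> R}) (f : 'I_n -> ('I_n -> R) -> R) :
  is_dag E ->
  additive_noise_model P E (fun k => X k : T -> R) (fun k => eps k : T -> R) f ->
  markov_pairs P E (fun k => X k : T -> R) ->
  faithful_pairs P E (fun k => X k : T -> R) ->
  forall i j : 'I_n, potential_parent E i j ->
    (~ PP1 E i j <-> ~ indep2 P (X i) (X j)).
Proof.
move=> dag _ mk fth i j [nij iDe]; split.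
- move=> nPP ind; apply: nPP; have nap := fth i j nij ind; split.
  + rewrite inE; apply/negP => Eij; apply: nap; exists [:: j]; split; [split|].
    * by rewrite /= /adj Eij.
    * by [].
    * by rewrite /= inE andbT.
    * by move=> x0 [|k].
  + move=> c; rewrite !inE => /andP [nci Ecj] [p [[pth lst un] cf]]; apply: nap.
    case: (boolP (j \in p)) => jp.
    * set m := index j p.
      exists (take m.+1 p); split; [split|].
      -- by move: pth; rewrite -{1}(cat_take_drop m.+1 p) cat_path => /andP [].
      -- by rewrite (take_nth j) ?index_mem // nth_index // last_rcons.
      -- have h := take_uniq m.+2 un; simpl in h; exact h.
      -- apply: (@cf_prefix _ _ _ (drop m.+1 p)); by rewrite /= cat_take_drop.
    * exists (rcons p j); split; [split|].
      -- by rewrite rcons_path pth lst /adj Ecj.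
      -- by rewrite last_rcons.
      -- rewrite -rcons_cons rcons_uniq un andbT inE negb_or jp andbT.
         by rewrite eq_sym.
      -- rewrite -rcons_cons; apply: cf_rcons => //; by rewrite lst.
- move=> nind [niPa Hc]; apply: nind; apply: (mk i j nij).
  move=> [p [[pth lst un] cf]].
  case/lastP: p pth lst un cf => [|q y] pth lst un cf.
    by move: nij; rewrite /= in lst; rewrite lst eqxx.
  rewrite last_rcons in lst; subst y.
  have pth0 := pth.
  move: pth; rewrite rcons_path => /andP [pq /orP adjv].
  case: adjv => Ev.
  + case: (eqVneq (last i q) i) => vi.
      by move: niPa; rewrite inE -{1}vi Ev.
    apply: (Hc (last i q)); first by rewrite !inE vi Ev.
    exists q; split; [split|] => //.
    * by move: un; rewrite -rcons_cons rcons_uniq => /andP [].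
    * apply: (@cf_prefix _ _ _ [:: j]); by rewrite cats1.
  + by move: iDe; rewrite (@back _ _ _ _ _ pth0 Ev cf).
Qed.
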